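(* For every positive integer $n$ there exists a word of length $n$ over an alphabet of size $O(\log n)$ that has at least $2^{\lfloor (n+1)/16\rfloor}$ different shortest s-covers.
   Context: For words $C,S$, $C$ is an \emph{s-cover} of $S$ if for every position $i$ of $S$ there exist indices $j_0<\dots<j_{|C|-1}$ with $S[j_t]=C[t]$ for all $t$ and $i\in\{j_0,\dots,j_{|C|-1}\}$. A shortest s-cover of $S$ is an s-cover of $S$ of minimum length. *)

(* Defs.v *)
From mathcomp Require Export all_boot.
Set Implicit Arguments. Unset Strict Implicit. Unset Printing Implicit Defensive.

(* An occurrence of C in S is given by a selection mask m of S (positions
   j_0 < ... < j_{|C|-1} are exactly the positions where m is true). *)
Definition is_scover (C S : seq nat) : Prop :=
  forall i, i < size S ->
    exists m : bitseq, [/\ size m = size S, mask m S = C & nth false m i].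

Definition is_shortest_scover (C S : seq nat) : Prop :=
  is_scover C S /\ forall C', is_scover C' S -> size C <= size C'.

Definition alphabet_size (S : seq nat) : nat := size (undup S).

(* Main.v *)
Require Import Defs.
From mathcomp Require Import all_boot.
From mathcomp Require Import zify.

Definition cov (C S : seq nat) := subseq C S /\ is_scover C S.
Definition scov (C S : seq nat) := cov C S /\ forall C', cov C' S -> size C <= size C'.

Lemma scov_shortest C S : scov C S -> is_shortest_scover C S.
Proof.
move=> [[sub covC] minC]; split=> // C' cC'.
case: S sub covC minC cC' => [|a S] sub covC minC cC'.
  by move: sub; rewrite subseq0 => /eqP ->.
apply: minC; split=> //.
have [m [sm <- _]] := cC' 0 (ltn0Sn _).
exact: mask_subseq.
Qed.

Lemma cat_x_inj (x : nat) P Q P' Q' : x \notin P -> x \notin P' ->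
  P ++ x :: Q = P' ++ x :: Q' -> P = P' /\ Q = Q'.
Proof.
move=> xP xP' e.
have ei : index x (P ++ x :: Q) = index x (P' ++ x :: Q') by rewrite e.
rewrite !index_cat (negPf xP) (negPf xP') /= eqxx !addn0 in ei.
have eP : P = P'.
  by rewrite -(take_size_cat (x :: Q) (erefl (size P))) e ei take_size_cat.
by split=> //; move: e; rewrite eP => /eqP; rewrite eqseq_cat // => /andP[_ /eqP[]].
Qed.

Lemma cov_cat (x : nat) A B C1 C2 : cov C1 A -> cov C2 B ->
  cov (C1 ++ x :: C2) (A ++ x :: B).
Proof.
move=> [s1 c1] [s2 c2]; split.
  by apply: cat_subseq => //=; rewrite eqxx.
have /subseqP[m1 sm1 e1] := s1.
have /subseqP[m2 sm2 e2] := s2.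
move=> i; rewrite size_cat /= => hi.
case: (ltngtP i (size A)) => hiA.
- have [m [sm em nm]] := c1 i hiA.
  exists (m ++ true :: m2); split.
  + by rewrite !size_cat /= sm sm2.
  + by rewrite mask_cat //= em e2.
  + by rewrite nth_cat sm hiA.
- have hiB : i - (size A).+1 < size B by lia.
  have [m [sm em nm]] := c2 _ hiB.
  exists (m1 ++ true :: m); split.
  + by rewrite !size_cat /= sm sm1.
  + by rewrite mask_cat //= em e1.
  + rewrite nth_cat sm1 ltnNge (ltnW hiA) /=.
    have -> : i - size A = (i - (size A).+1).+1 by lia.
    by [].
- exists (m1 ++ true :: m2); split.
  + by rewrite !size_cat /= sm1 sm2.
  + by rewrite mask_cat //= e1 e2.
  + by rewrite nth_cat sm1 hiA ltnn subnn.
Qed.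

Lemma split_mask (m : bitseq) (A B : seq nat) x :
  size m = size (A ++ x :: B) ->
  exists m1 b m2, [/\ m = m1 ++ b :: m2, size m1 = size A & size m2 = size B].
Proof.
move=> sm; exists (take (size A) m), (nth false m (size A)), (drop (size A).+1 m).
split.
- by rewrite -drop_nth ?cat_take_drop // sm size_cat /= addnS ltnS leq_addr.
- by rewrite size_take sm size_cat /= addnS ltnS leq_addr.
- by rewrite size_drop sm size_cat /= addnS subSS addKn.
Qed.

Lemma cov_split (x : nat) A B C : x \notin A -> x \notin B ->
  cov C (A ++ x :: B) -> exists C1 C2, [/\ C = C1 ++ x :: C2, cov C1 A & cov C2 B].
Proof.
move=> xA xB [sC cC].
have hx : size A < size (A ++ x :: B) by rewrite size_cat /= addnS ltnS leq_addr.
have [m [sm em nm]] := cC _ hx.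
have [m1 [b [m2 [mE sm1 sm2]]]] := split_mask _ _ _ _ sm.
rewrite {}mE in nm em sm.
rewrite nth_cat sm1 ltnn subnn /= in nm; rewrite nm in em.
rewrite mask_cat //= in em.
have xC1 : x \notin mask m1 A by apply: contra xA; apply: mem_mask.
have xC2 : x \notin mask m2 B by apply: contra xB; apply: mem_mask.
exists (mask m1 A), (mask m2 B); split=> //.
- split; first exact: mask_subseq.
  move=> i hi.
  have hi' : i < size (A ++ x :: B) by rewrite size_cat ltn_addr.
  have [m' [sm' em' nm']] := cC _ hi'.
  have [m1' [b' [m2' [e' sm1' sm2']]]] := split_mask _ _ _ _ sm'.
  rewrite e' mask_cat // -em in em'.
  case: b' e' em' nm' => e' em' nm'.
    rewrite /= in em'.
    have [<- _] := cat_x_inj _ _ _ _ _ (contra (@mem_mask _ x m1' A) xA) xC1 em'.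
    exists m1'; split=> //; by rewrite e' nth_cat sm1' hi in nm'.
  have : x \in mask m1' A ++ mask m2' B by rewrite em' mem_cat inE eqxx orbT.
  rewrite mem_cat; case/orP=> /mem_mask; by rewrite ?(negPf xA) ?(negPf xB).
- split; first exact: mask_subseq.
  move=> i hi.
  have hi' : size A + i.+1 < size (A ++ x :: B) by rewrite size_cat /= ltn_add2l.
  have [m' [sm' em' nm']] := cC _ hi'.
  have [m1' [b' [m2' [e' sm1' sm2']]]] := split_mask _ _ _ _ sm'.
  rewrite e' mask_cat // -em in em'.
  case: b' e' em' nm' => e' em' nm'.
    rewrite /= in em'.
    have [_ <-] := cat_x_inj _ _ _ _ _ (contra (@mem_mask _ x m1' A) xA) xC1 em'.
    exists m2'; split=> //.
    by rewrite e' nth_cat sm1' ltnNge leq_addr /= addKn in nm'.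
  have : x \in mask m1' A ++ mask m2' B by rewrite em' mem_cat inE eqxx orbT.
  rewrite mem_cat; case/orP=> /mem_mask; by rewrite ?(negPf xA) ?(negPf xB).
Qed.
Definition Pc S k := exists L : seq (seq nat),
  [/\ uniq L, forall C, C \in L -> scov C S & k <= size L].

Lemma notin_sub (x : nat) C A : subseq C A -> x \notin A -> x \notin C.
Proof. by move=> /mem_subseq h; apply: contra; apply: h. Qed.

Lemma Pc_cat x A B k1 k2 : x \notin A -> x \notin B -> Pc A k1 -> Pc B k2 ->
  Pc (A ++ x :: B) (k1 * k2).
Proof.
move=> xA xB [L1 [u1 h1 s1]] [L2 [u2 h2 s2]].
exists [seq c1 ++ x :: c2 | c1 <- L1, c2 <- L2]; split.
- apply: allpairs_uniq => // [[a b]] [c d] /allpairsP[[a' b'] /= [ha hb [-> ->]]]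
    /allpairsP[[c' d'] /= [hc hd [-> ->]]] /= e.
  have xa : x \notin a' by apply: notin_sub xA; case: (h1 _ ha) => [[]].
  have xc : x \notin c' by apply: notin_sub xA; case: (h1 _ hc) => [[]].
  by have [-> ->] := cat_x_inj _ _ _ _ _ xa xc e.
- move=> C /allpairsP[[c1 c2] /= [hc1 hc2 ->]].
  have [cv1 m1] := h1 _ hc1; have [cv2 m2] := h2 _ hc2.
  split; first exact: cov_cat.
  move=> C' /(cov_split _ _ _ _ xA xB)[D1 [D2 [-> d1 d2]]].
  rewrite !size_cat /= !addnS ltnS; apply: leq_add; [exact: m1 | exact: m2].
- rewrite size_allpairs. exact: leq_mul.
Qed.

Lemma Pc_nil : Pc [::] 1.
Proof.
exists [:: [::]]; split=> // C; rewrite inE => /eqP ->; split=> //.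
Qed.

Lemma Pc_snoc x A k : x \notin A -> Pc A k -> Pc (A ++ [:: x]) k.
Proof.
move=> xA hA; rewrite -(muln1 k); exact: (Pc_cat x A [::] k 1 xA isT hA Pc_nil).
Qed.
Fixpoint allmasks n : seq bitseq :=
  if n is n'.+1 then [seq b :: m | b <- [:: true; false], m <- allmasks n'] else [:: [::]].

Lemma allmasksP m : m \in allmasks (size m).
Proof.
elim: m => [|b m IH] //=.
have inj : forall c, injective (cons c : bitseq -> bitseq) by move=> c x y [].
by case: b => /=; rewrite !mem_cat ?(mem_map (inj _)) IH ?orbT.
Qed.

Lemma allmasks_size n m : m \in allmasks n -> size m = n.
Proof.
elim: n m => [|n IH] m /=; first by rewrite inE => /eqP ->.
by rewrite !mem_cat in_nil orbF => /orP[] /mapP[m' /IH <- ->].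
Qed.

Definition coverb (C S : seq nat) :=
  all (fun i => has (fun m => (mask m S == C) && nth false m i) (allmasks (size S)))
      (iota 0 (size S)).

Lemma coverbP C S : coverb C S -> is_scover C S.
Proof.
move=> /allP h i hi.
have hi' : i \in iota 0 (size S) by rewrite mem_iota.
have /hasP[m hm /andP[/eqP em nm]] := h i hi'.
by exists m; split=> //; apply: allmasks_size.
Qed.

Lemma coverbP2 C S : is_scover C S -> coverb C S.
Proof.
move=> h; apply/allP => i; rewrite mem_iota add0n => /andP[_ hi].
have [m [sm em nm]] := h i hi.
by apply/hasP; exists m; [rewrite -sm; apply: allmasksP | rewrite em eqxx].
Qed.

Definition G : seq nat := [:: 0;1;0;1;2;0;3;2;3;2].
Definition G1 : seq nat := [:: 0;1;0;2;3;2].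
Definition G2 : seq nat := [:: 0;1;2;0;3;2].

Definition gadget_ok :=
  all (fun m => (6 <= size (mask m G)) || ~~ coverb (mask m G) G) (allmasks 10).

Lemma gadget_okT : gadget_ok.
Proof. vm_compute. reflexivity. Qed.

Lemma gadget_min C : cov C G -> 6 <= size C.
Proof.
move=> [/subseqP[m sm ->] /coverbP2 cb].
have := allP gadget_okT m; rewrite -[10]/(size G) -sm allmasksP => /(_ isT).
by rewrite cb orbF.
Qed.

Lemma gadget_cov1 : cov G1 G.
Proof. split; [by [] | apply: coverbP; vm_compute; reflexivity]. Qed.
Lemma gadget_cov2 : cov G2 G.
Proof. split; [by [] | apply: coverbP; vm_compute; reflexivity]. Qed.

Lemma Pc_G : Pc G 2.
Proof.
exists [:: G1; G2]; split=> // C; rewrite !inE => /orP[] /eqP ->;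
  split; [exact: gadget_cov1 | move=> C' /gadget_min // | exact: gadget_cov2 | move=> C' /gadget_min //].
Qed.
Fixpoint T d := if d is d'.+1 then T d' ++ (100 + d') :: T d' else G.
Fixpoint V d t := if d is d'.+1 then
    (if t <= 2 ^ d' then V d' t else T d' ++ (100 + d') :: V d' (t - 2 ^ d'))
  else (if t is 0 then [::] else G).

Definition good d (s : seq nat) := all (fun a => (a < 4) || ((100 <= a) && (a < 100 + d))) s.

Lemma good_mono d d' s : d <= d' -> good d s -> good d' s.
Proof.
move=> le /allP h; apply/allP => a /h /orP[->//|/andP[h1 h2]].
by apply/orP; right; apply/andP; split; lia.
Qed.

Lemma goodG : good 0 G. Proof. by []. Qed.

Lemma good_T d : good d (T d).
Proof.
elim: d => [|d IH] /=; first exact: goodG.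
have g := good_mono _ _ _ (leqnSn d) IH.
rewrite /good all_cat /= -!/(good _ _) g /= andbT; lia.
Qed.

Lemma good_V d t : good d (V d t).
Proof.
elim: d t => [|d IH] t /=; first by case: t.
case: ifP => _; first exact: good_mono _ _ _ (leqnSn d) (IH t).
rewrite /good all_cat /= -!/(good _ _) (good_mono _ _ _ (leqnSn d) (good_T d)).
rewrite (good_mono _ _ _ (leqnSn d) (IH _)) /= andbT; lia.
Qed.

Lemma good_notin d j s : good d s -> 100 + d + j \notin s.
Proof.
move=> /allP h; apply/negP => /h /orP[|/andP[_]]; lia.
Qed.

Lemma size_T d : (size (T d)).+1 = 11 * 2 ^ d.
Proof.
elim: d => [|d IH] //=; rewrite size_cat /= expnS; lia.
Qed.

Lemma size_V d t : t <= 2 ^ d -> size (V d t) = 11 * t - 1.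
Proof.
elim: d t => [|d IH] t /=.
  by case: t => [|[|t]].
have p0 := expn_gt0 2 d; rewrite /= in p0.
case: ifP => [h _|h]; first exact: IH.
rewrite expnS => ht; rewrite size_cat /= IH; last lia.
have := size_T d; lia.
Qed.

Lemma Pc_T d : Pc (T d) (2 ^ (2 ^ d)).
Proof.
elim: d => [|d IH] /=; first exact: Pc_G.
have xn := good_notin _ 0 _ (good_T d); rewrite addn0 in xn.
by rewrite expnS mul2n -addnn expnD; apply: Pc_cat.
Qed.

Lemma Pc_V d t : t <= 2 ^ d -> Pc (V d t) (2 ^ t).
Proof.
elim: d t => [|d IH] t /=.
  by case: t => [|[|t]] // _; [exact: Pc_nil | exact: Pc_G].
case: ifP => [h _|h]; first exact: IH.
rewrite expnS => ht.
have xn1 := good_notin _ 0 _ (good_T d); rewrite addn0 in xn1.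
have xn2 := good_notin _ 0 _ (good_V d (t - 2 ^ d)); rewrite addn0 in xn2.
have -> : 2 ^ t = 2 ^ (2 ^ d) * 2 ^ (t - 2 ^ d) by rewrite -expnD; congr (_ ^ _); lia.
apply: Pc_cat => //; first exact: Pc_T.
apply: IH; lia.
Qed.

Lemma Pc_pad D s k0 k : good D s -> Pc s k0 -> Pc (s ++ iota (100 + D) k) k0.
Proof.
move=> g h; elim: k => [|k IH]; first by rewrite cats0.
have -> : iota (100 + D) k.+1 = iota (100 + D) k ++ [:: 100 + D + k] by rewrite -[k.+1]addn1 iotaD.
rewrite catA; apply: Pc_snoc => //.
rewrite mem_cat negb_or good_notin //= mem_iota; lia.
Qed.
Theorem mainTheorem17 :
  exists c : nat, forall n : nat, 0 < n ->
    exists S : seq nat,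
      [/\ size S = n,
          alphabet_size S <= c * (trunc_log 2 n).+1 &
          exists L : seq (seq nat),
            [/\ uniq L,
                forall C, C \in L -> is_shortest_scover C S &
                2 ^ ((n + 1) %/ 16) <= size L]].
Proof.
exists 15 => n n0.
set D := trunc_log 2 n.
set t := (n + 1) %/ 11.
have hD := trunc_log_ltn n (isT : 1 < 2); rewrite -/D expnS in hD.
have ht : t <= 2 ^ D by rewrite /t; lia.
have sv := size_V _ _ ht.
set v := V D t.
have hk : n - size v <= 10 by rewrite sv /t; lia.
exists (v ++ iota (100 + D) (n - size v)); split.
- rewrite size_cat size_iota sv /t; lia.
- rewrite /alphabet_size.
  apply: leq_trans (_ : size (iota 0 4 ++ iota 100 (D + (n - size v))) <= _); last first.
    by rewrite size_cat !size_iota; lia.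
  apply: uniq_leq_size; first exact: undup_uniq.
  move=> a; rewrite mem_undup mem_cat !mem_cat !mem_iota => /orP[].
    by move=> /(allP (good_V D t)) /orP[|/andP[]]; lia.
  by move=> /andP[]; lia.
- have [L [uL hL sL]] := Pc_pad _ _ _ (n - size v) (good_V D t) (Pc_V _ _ ht).
  exists L; split=> //.
    by move=> C /hL; apply: scov_shortest.
  apply: leq_trans sL; rewrite leq_exp2l // /t; lia.
Qed.
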